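(* For integers $0\leq k\leq a<b$, the following identity of rational functions in $q$ holds: $$\frac1{\binom{a+k}{k}_q}-\frac1{\binom{b+k}{k}_q}=\sum_{i=1}^kq^{a+i}\frac{1-q^{b-a}}{1-q^{b+i}}\prod_{j=i}^k\frac{1-q^j}{1-q^{a+j}}\prod_{j=1}^{i-1}\frac{1-q^j}{1-q^{b+j}}.$$
   Context: For nonnegative integers $n$, $[n]!_q=\prod_{j=1}^n\frac{1-q^j}{1-q}$ (with $[0]!_q=1$), and for integers $0\le k\le n$, $\binom{n}{k}_q=\frac{[n]!_q}{[k]!_q[n-k]!_q}$. Empty products equal $1$ and empty sums equal $0$. *)

(* Defs.v *)
From HB Require Import structures.
From mathcomp Require Import all_boot all_order all_algebra fraction.
Set Implicit Arguments. Unset Strict Implicit. Unset Printing Implicit Defensive.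
Import Order.TTheory GRing.Theory Num.Theory.
Local Open Scope ring_scope.

Definition qfact (F : fieldType) (q : F) (n : nat) : F :=
  \prod_(1 <= j < n.+1) ((1 - q ^+ j) / (1 - q)).

Definition qbinom (F : fieldType) (q : F) (n k : nat) : F :=
  qfact q n / (qfact q k * qfact q (n - k)).

Definition ratfun := {fraction {poly rat}}.
Definition qvar : ratfun := FracField.tofrac ('X : {poly rat}).

(* Main.v *)
Require Import Defs.
From HB Require Import structures.
From mathcomp Require Import all_boot all_order all_algebra fraction.
From mathcomp Require Import ring zify.
Import GRing.Theory.
Local Open Scope ring_scope.

Section Gen.
Variable F : fieldType.
Variable q : F.

Lemma qfact_split (a k : nat) :
  qfact q (a + k) = qfact q a * \prod_(1 <= j < k.+1) ((1 - q ^+ (a + j)) / (1 - q)).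
Proof.
elim: k => [|k IH]; first by rewrite addn0 big_geq // mulr1.
by rewrite {1}/qfact addnS big_nat_recr //= -/(qfact q (a+k)) IH [in RHS]big_nat_recr //= addnS !mulrA.
Qed.


Lemma prod_nat_neq0 (m n : nat) (f : nat -> F) :
  (forall i, (m <= i < n)%N -> f i != 0) -> \prod_(m <= i < n) f i != 0.
Proof.
move=> H; rewrite prodf_seq_neq0; apply/allP => i; rewrite mem_index_iota => /H ->.
by [].
Qed.

Hypothesis hq : forall n, (0 < n)%N -> 1 - q ^+ n != 0.

Lemma hq1 : 1 - q != 0.
Proof. by have := @hq 1 isT; rewrite expr1. Qed.

Lemma qfact_neq0 n : qfact q n != 0.
Proof.
apply: prod_nat_neq0 => i /andP [hi _]; apply: mulf_neq0; first exact: hq.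
by rewrite invr_neq0 // hq1.
Qed.

Lemma inv_qbinom a k :
  (qbinom q (a + k) k)^-1 = \prod_(1 <= j < k.+1) ((1 - q ^+ j) / (1 - q ^+ (a + j))).
Proof.
rewrite /qbinom addnK qfact_split.
rewrite [RHS](eq_big_nat _ _ (F2 := fun j => ((1 - q ^+ j) / (1 - q)) / ((1 - q ^+ (a + j)) / (1 - q)))); last first.
  move=> j /andP [hj _]. have h1 := hq1. have h2 := @hq j hj.
  have h3 : 1 - q ^+ (a + j) != 0 by apply: hq; rewrite addn_gt0 hj orbT.
  by field; rewrite h1 h3.
rewrite (prodf_div _ _ (fun j => (1 - q ^+ j) / (1 - q)) (fun j => (1 - q ^+ (a + j)) / (1 - q))) -/(qfact q k).
have h1 := qfact_neq0 a. have h2 := qfact_neq0 k.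
have h3 : \prod_(1 <= j < k.+1) ((1 - q ^+ (a + j)) / (1 - q)) != 0.
  apply: prod_nat_neq0 => i /andP [hi _]; apply: mulf_neq0.
    by apply: hq; rewrite addn_gt0 hi orbT.
  by rewrite invr_neq0 // hq1.
by field; rewrite h1 h2 h3.
Qed.


Lemma main_gen (k a b : nat) : (a < b)%N ->
  (qbinom q (a + k) k)^-1 - (qbinom q (b + k) k)^-1 =
  \sum_(1 <= i < k.+1)
     (q ^+ (a + i) * ((1 - q ^+ (b - a)) / (1 - q ^+ (b + i)))
      * (\prod_(i <= j < k.+1) ((1 - q ^+ j) / (1 - q ^+ (a + j))))
      * (\prod_(1 <= j < i) ((1 - q ^+ j) / (1 - q ^+ (b + j))))).
Proof.
move=> hab.
rewrite !inv_qbinom.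
pose P i := \prod_(i <= j < k.+1) ((1 - q ^+ j) / (1 - q ^+ (a + j)))
   * \prod_(1 <= j < i) ((1 - q ^+ j) / (1 - q ^+ (b + j))).
have -> : \prod_(1 <= j < k.+1) ((1 - q ^+ j) / (1 - q ^+ (a + j))) = P 1.
  by rewrite /P [X in _ = _ * X]big_geq // mulr1.
have -> : \prod_(1 <= j < k.+1) ((1 - q ^+ j) / (1 - q ^+ (b + j))) = P k.+1.
  by rewrite /P [X in _ = X * _]big_geq // mul1r.
symmetry.
rewrite (telescope_sumr_eq (fun i => - P i)) //; first by rewrite opprK addrC.
move=> i /andP [hi hik].
rewrite /P (big_ltn (m := i)) // (big_nat_recr i 1) //=.
set X := \prod_(i.+1 <= j < k.+1) _.
set Y := \prod_(1 <= j < i) _.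
have ha : 1 - q ^+ (a + i) != 0 by apply: hq; rewrite addn_gt0 hi orbT.
have hb : 1 - q ^+ (b + i) != 0 by apply: hq; rewrite addn_gt0 hi orbT.
have e : (b + i = (a + i) + (b - a))%N by lia.
move: hb; rewrite e exprD => hb.
by field; rewrite ha hb.
Qed.

End Gen.

Lemma qvar_ok : forall n, (0 < n)%N -> 1 - qvar ^+ n != 0.
Proof.
move=> n hn.
have -> : 1 - qvar ^+ n = FracField.tofrac (1 - 'X^n : {poly rat}).
  by rewrite /qvar tofracB tofrac1 tofracXn.
rewrite tofrac_eq0; apply/eqP => h.
have := congr1 (fun p : {poly rat} => p.[0]) h.
by rewrite /= !hornerE expr0n eqn0Ngt hn /= subr0 => /eqP; rewrite oner_eq0.
Qed.

Theorem lemma8 (k a b : nat) (hka : (k <= a)%N) (hab : (a < b)%N) :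
  let q := qvar in
  (qbinom q (a + k) k)^-1 - (qbinom q (b + k) k)^-1 =
  \sum_(1 <= i < k.+1)
     (q ^+ (a + i) * ((1 - q ^+ (b - a)) / (1 - q ^+ (b + i)))
      * (\prod_(i <= j < k.+1) ((1 - q ^+ j) / (1 - q ^+ (a + j))))
      * (\prod_(1 <= j < i) ((1 - q ^+ j) / (1 - q ^+ (b + j))))).
Proof. move=> q. have := @main_gen _ qvar qvar_ok k a b hab. rewrite /q. move=> H. exact: H. Qed.
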